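(* Let $P=[0,1]$, let $l$ be a positive integer, $r=2^l-1$, $\sigma_r=\sum_{i=r+1}^{2r+1}\frac1i$, and $Q=\{q_1,\dots,q_r\}$ with $q_i=\frac{1}{\sigma_r}\sum_{j=r+1}^{r+i}\frac1j$. Then there exists an ordering $\tau$ of $Q$ such that the following online algorithm satisfies $OPT_A(S;P)\le 2\sigma_r\cdot\min_{t\le T}d_{min}(t;X)$ (with $X$ its output) for every instance $S$ whose maximum number $m$ of simultaneously present points satisfies $m\le r$. The algorithm maintains a set $\hat Q$ of positions ever used, each labelled occupied or vacant (initially empty); when a point departs its position becomes vacant; when a point arrives, if some position in $\hat Q$ is vacant the point is put at an arbitrary vacant position (now occupied); otherwise, if $Q\not\subseteq\hat Q$ the point is put at the first position of $Q\setminus\hat Q$ according to $\tau$, and if $Q\subseteq\hat Q$ it is put at the midpoint of a largest interval into which $[0,1]$ is divided by $\hat Q$; in both latter cases the new position is added to $\hat Q$ as occupied.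
   Context: Distances are Euclidean; $\partial P=\{0,1\}$. An instance is a sequence $S=((s_1,d_1),\dots,(s_n,d_n))$ with $s_i<d_i$, $0=s_1\le\dots\le s_n$; point $i$ is present at time $t$ iff $s_i\le t\le d_i$; $T=\max_i d_i$; $m=\max_{t\le T}|\{i:s_i\le t\le d_i\}|$. For locations $X=(X_1,\dots,X_n)\in P^n$, $d_{min}(t;X)=\min\{dis(X_i,\partial P),dis(X_i,X_j)\}$ over present points $i\ne j$ at time $t$, and $OPT_A(S;P)=\max_X\min_{t\le T}d_{min}(t;X)$. The algorithm is online: it places each arriving point irrevocably without knowing future events. *)

(* Defs.v *)
From Stdlib Require Import Reals Lra Lia List Permutation.
From Coquelicot Require Import Coquelicot.
Open Scope R_scope.

(* ---------- Instances ----------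
   An instance with n points: point i (0-based, i < n) has arrival s i and
   departure d i.  Paper's (s_1,d_1),...,(s_n,d_n) = (s 0, d 0),...,(s (n-1), d (n-1)). *)
Definition valid_instance (n : nat) (s d : nat -> R) : Prop :=
  (0 < n)%nat /\ s 0%nat = 0 /\
  (forall i, (i < n)%nat -> s i < d i) /\
  (forall i, (S i < n)%nat -> s i <= s (S i)).

Definition present (s d : nat -> R) (i : nat) (t : R) : Prop := s i <= t <= d i.

Definition Tmax (n : nat) (d : nat -> R) : R :=
  fold_right Rmax 0 (map d (seq 0 n)).

Definition present_b (s d : nat -> R) (t : R) (i : nat) : bool :=
  if Rle_dec (s i) t then (if Rle_dec t (d i) then true else false) else false.
Definition npresent (n : nat) (s d : nat -> R) (t : R) : nat :=
  length (filter (present_b s d t) (seq 0 n)).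

Definition dist_bd (x : R) : R := Rmin (Rabs (x - 0)) (Rabs (x - 1)).

(* d_min(t;X): min over present points of boundary distances and pairwise
   distances (as an infimum; +oo if no point is present). *)
Definition dmin (n : nat) (s d : nat -> R) (X : nat -> R) (t : R) : Rbar :=
  Glb_Rbar (fun y =>
    (exists i, (i < n)%nat /\ present s d i t /\ y = dist_bd (X i)) \/
    (exists i j, (i < n)%nat /\ (j < n)%nat /\ i <> j /\
       present s d i t /\ present s d j t /\ y = Rabs (X i - X j))).

Definition minval (n : nat) (s d : nat -> R) (X : nat -> R) : Rbar :=
  Rbar_glb (fun v => exists t, 0 <= t <= Tmax n d /\ v = dmin n s d X t).

Definition in_Pn (n : nat) (X : nat -> R) : Prop :=
  forall i, (i < n)%nat -> 0 <= X i <= 1.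

Definition OPT_A (n : nat) (s d : nat -> R) : Rbar :=
  Rbar_lub (fun v => exists X, in_Pn n X /\ v = minval n s d X).

Definition rsum (a k : nat) : R := fold_right Rplus 0 (map (fun j => / INR j) (seq a k)).
Definition sigmaH (r : nat) : R := rsum (S r) (S r).
Definition qpos (r i : nat) : R := / sigmaH r * rsum (S r) i.
Definition Qlist (r : nat) : list R := map (qpos r) (seq 1 r).

(* ---------- The online algorithm ----------
   Points are processed in arrival order i = 0,1,...,n-1.  When point i
   arrives (at time s i), the points j < i with d j < s i have departed and
   the points j < i with s i <= d j are still present (presence is on the
   closed interval [s_j,d_j]). *)
Definition Qhat (X : nat -> R) (i : nat) (p : R) : Prop :=
  exists j, (j < i)%nat /\ X j = p.
Definition occupied (s d X : nat -> R) (i : nat) (p : R) : Prop :=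
  exists j, (j < i)%nat /\ s i <= d j /\ X j = p.
Definition vacant (s d X : nat -> R) (i : nat) (p : R) : Prop :=
  Qhat X i p /\ ~ occupied s d X i p.

Definition first_not_in (tau : list R) (A : R -> Prop) (q : R) : Prop :=
  exists k, (k < length tau)%nat /\ nth k tau 0 = q /\ ~ A q /\
    forall k', (k' < k)%nat -> A (nth k' tau 0).

Definition largest_gap_mid (A : R -> Prop) (x : R) : Prop :=
  let B := fun c => A c \/ c = 0 \/ c = 1 in
  exists a b, B a /\ B b /\ a < b /\ (forall c, B c -> ~ (a < c < b)) /\
    (forall a' b', B a' -> B b' -> a' < b' -> (forall c, B c -> ~ (a' < c < b')) ->
        b' - a' <= b - a) /\
    x = (a + b) / 2.

(* X is a possible output of the (nondeterministic) algorithm with the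
   position set Q and the ordering tau of Q on the instance (n,s,d). *)
Definition alg_run (Q tau : list R) (n : nat) (s d X : nat -> R) : Prop :=
  forall i, (i < n)%nat ->
    ((exists p, vacant s d X i p) -> vacant s d X i (X i)) /\
    ((~ exists p, vacant s d X i p) ->
       (exists q, In q Q /\ ~ Qhat X i q) -> first_not_in tau (Qhat X i) (X i)) /\
    ((~ exists p, vacant s d X i p) ->
       (forall q, In q Q -> Qhat X i q) -> largest_gap_mid (Qhat X i) (X i)).

(* Main.v *)
Require Import Defs.
From Stdlib Require Import Reals List Lia Lra Permutation Classical.
From Coquelicot Require Import Coquelicot.
Import ListNotations.
Open Scope R_scope.
Open Scope nat_scope.

Fixpoint tau (l : nat) : list nat :=
  match l with
  | O => []
  | S l' => map (fun x => 2 * x)%nat (tau l') ++ map (fun j => 2 * j + 1)%nat (seq 0 (2 ^ l'))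
  end.

Lemma tau_len l : length (tau l) = (2 ^ l - 1)%nat.
Proof.
  induction l; simpl; auto.
  rewrite length_app, !length_map, length_seq, IHl.
  assert (1 <= 2 ^ l)%nat by (apply Nat.le_succ_l, Nat.neq_0_lt_0, Nat.pow_nonzero; lia). lia.
Qed.

Lemma tau_In l x : In x (tau l) <-> (1 <= x < 2 ^ l)%nat.
Proof.
  revert x; induction l; intro x; simpl.
  - lia.
  - rewrite in_app_iff, !in_map_iff. split.
    + intros [[y [<- Hy]]|[j [<- Hj]]].
      * apply IHl in Hy; lia.
      * apply in_seq in Hj; lia.
    + intro H. destruct (Nat.Even_or_Odd x) as [[y Hy]|[y Hy]].
      * left; exists y; split; [lia|]. apply IHl; lia.
      * right; exists y; split; [lia|]. apply in_seq; lia.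
Qed.

Lemma tau_NoDup l : NoDup (tau l).
Proof.
  induction l; simpl. constructor.
  apply NoDup_app.
  - apply FinFun.Injective_map_NoDup; auto. intros a b; lia.
  - apply FinFun.Injective_map_NoDup; [intros a b; lia| apply seq_NoDup].
  - intros a Ha Hb. apply in_map_iff in Ha, Hb. destruct Ha as [y [Hy _]], Hb as [z [Hz _]]. lia.
Qed.

Lemma tau_perm l : Permutation (tau l) (seq 1 (2 ^ l - 1)).
Proof.
  apply NoDup_Permutation. apply tau_NoDup. apply seq_NoDup.
  intro x. rewrite tau_In, in_seq.
  assert (1 <= 2 ^ l)%nat by (apply Nat.le_succ_l, Nat.neq_0_lt_0, Nat.pow_nonzero; lia). lia.
Qed.

Lemma firstn_seq' p len st : (p <= len)%nat -> firstn p (seq st len) = seq st p.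
Proof.
  revert len st; induction p; intros len st H; simpl; auto.
  destruct len; [lia|]. simpl. f_equal. apply IHp. lia.
Qed.

Definition Bd l c x := x = 0%nat \/ x = (2 ^ l)%nat \/ In x (firstn c (tau l)).

Lemma tau_gap l : forall c, (c <= 2 ^ l - 1)%nat -> forall a b, (a < b)%nat -> Bd l c a -> Bd l c b ->
  (2 ^ l + b <= 2 * (c + 1) * (b - a))%nat.
Proof.
  induction l; intros c Hc a b Hab Ha Hb.
  - simpl in *. unfold Bd in *. simpl in *. destruct c; simpl in *; [|lia].
    lia.
  - unfold Bd in Ha, Hb. simpl tau in Ha, Hb. rewrite firstn_app, length_map, tau_len in Ha, Hb.
    set (P := (2 ^ l)%nat) in *.
    assert (HP : (1 <= P)%nat) by (apply Nat.le_succ_l, Nat.neq_0_lt_0, Nat.pow_nonzero; lia).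
    assert (E2 : (2 ^ S l = 2 * P)%nat) by (simpl; unfold P; lia).
    rewrite E2 in *.
    destruct (Nat.le_gt_cases c (P - 1)) as [Hc1|Hc1].
    + replace (c - (P - 1))%nat with 0%nat in Ha, Hb by lia. simpl in Ha, Hb.
      rewrite app_nil_r, firstn_map in Ha, Hb.
      assert (Ha' : exists a', a = (2 * a')%nat /\ Bd l c a').
      { destruct Ha as [->|[->|Ha]]. exists 0%nat; split; [lia| left; auto].
        exists P; split; [lia| right; left; auto].
        apply in_map_iff in Ha. destruct Ha as [y [<- Hy]]. exists y; split; auto. right; right; auto. }
      assert (Hb' : exists b', b = (2 * b')%nat /\ Bd l c b').
      { destruct Hb as [->|[->|Hb]]. exists 0%nat; split; [lia| left; auto].
        exists P; split; [lia| right; left; auto].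
        apply in_map_iff in Hb. destruct Hb as [y [<- Hy]]. exists y; split; auto. right; right; auto. }
      destruct Ha' as [a' [-> Ha']], Hb' as [b' [-> Hb']].
      assert (IH := IHl c Hc1 a' b' ltac:(lia) Ha' Hb'). fold P in IH.
      replace (2 * b' - 2 * a')%nat with (2 * (b' - a'))%nat by lia. nia.
    + set (p := (c - (P - 1))%nat) in *.
      rewrite firstn_all2 in Ha, Hb by (rewrite length_map, tau_len; lia).
      rewrite firstn_map, firstn_seq' in Ha, Hb by (unfold p; lia).
      assert (Cl : forall x, (x = 0 \/ x = 2 * P \/ In x (map (fun x => 2 * x) (tau l) ++ map (fun j => 2 * j + 1) (seq 0 p)))%nat ->
          (x = 0 \/ x = 2 * P \/ (exists y, x = 2 * y /\ 1 <= y < P) \/ (exists j, x = 2 * j + 1 /\ j < p))%nat).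
      { intros x [H|[H|H]]; auto. rewrite in_app_iff, !in_map_iff in H.
        destruct H as [[y [<- Hy]]|[j [<- Hj]]].
        - apply tau_In in Hy. right; right; left; exists y; split; auto.
        - apply in_seq in Hj. right; right; right; exists j; split; auto; lia. }
      apply Cl in Ha, Hb.
      assert (F : (b <= 2 * p \/ 2 <= b - a)%nat).
      { destruct Ha as [Ha|[Ha|[[y [Ha Hy]]|[j [Ha Hj]]]]];
        destruct Hb as [Hb|[Hb|[[y' [Hb Hy']]|[j' [Hb Hj']]]]]; lia. }
      assert (Hbmax : (b <= 2 * P)%nat).
      { destruct Hb as [Hb|[Hb|[[y' [Hb Hy']]|[j' [Hb Hj']]]]]; lia. }
      replace (c + 1)%nat with (P + p)%nat by (unfold p; lia).
      destruct F as [F|F]; nia.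
Qed.
Open Scope R_scope.

Lemma rsum_S a k : rsum a (S k) = / INR a + rsum (S a) k.
Proof. reflexivity. Qed.

Lemma rsum_add a k1 k2 : rsum a (k1 + k2) = rsum a k1 + rsum (a + k1) k2.
Proof.
  revert a; induction k1; intro a; simpl.
  - unfold rsum; simpl. rewrite Nat.add_0_r. ring.
  - rewrite rsum_S, IHk1, rsum_S. replace (S a + k1)%nat with (a + S k1)%nat by lia. ring.
Qed.

Lemma rsum_lb a k : (1 <= a)%nat -> INR k / INR (a + k) <= rsum a k.
Proof.
  revert a; induction k; intros a Ha.
  - unfold rsum; simpl. unfold Rdiv; rewrite Rmult_0_l; lra.
  - rewrite rsum_S. specialize (IHk (S a) ltac:(lia)).
    replace (S a + k)%nat with (a + S k)%nat in IHk by lia.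
    assert (HA : 1 <= INR a) by (apply (le_INR 1); auto).
    rewrite S_INR. set (M := INR (a + S k)) in *.
    assert (HM : INR a <= M) by (unfold M; apply le_INR; lia).
    assert (/ M <= / INR a) by (apply Rinv_le_contravar; lra).
    unfold Rdiv in *. rewrite Rmult_plus_distr_r. lra.
Qed.

Lemma rsum_nonneg a k : 0 <= rsum a k.
Proof.
  revert a; induction k; intro a. unfold rsum; simpl; lra.
  rewrite rsum_S. specialize (IHk (S a)).
  destruct a. change (INR 0) with 0. rewrite Rinv_0; lra.
  assert (0 < INR (S a)) by (apply lt_0_INR; lia).
  assert (0 < / INR (S a)) by (apply Rinv_0_lt_compat; auto). lra.
Qed.

Lemma sigma_pos r : 0 < sigmaH r.
Proof.
  unfold sigmaH. eapply Rlt_le_trans; [|apply rsum_lb; lia].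
  unfold Rdiv. apply Rmult_lt_0_compat. apply lt_0_INR; lia.
  apply Rinv_0_lt_compat, lt_0_INR; lia.
Qed.

Lemma qpos_0 r : qpos r 0 = 0.
Proof. unfold qpos, rsum; simpl; ring. Qed.

Lemma qpos_top r : qpos r (S r) = 1.
Proof. unfold qpos. fold (sigmaH r). field. apply Rgt_not_eq, sigma_pos. Qed.

Lemma qpos_diff r a b : (a <= b)%nat ->
  qpos r b - qpos r a = / sigmaH r * rsum (S r + a) (b - a).
Proof.
  intro H. unfold qpos. replace b with (a + (b - a))%nat at 1 by lia.
  rewrite rsum_add. ring.
Qed.

Lemma qpos_gap r c a b : (a < b)%nat -> (S r + b <= 2 * (c + 1) * (b - a))%nat ->
  / (2 * sigmaH r * INR (S c)) <= qpos r b - qpos r a.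
Proof.
  intros Hab H. rewrite qpos_diff by lia.
  assert (Hs := sigma_pos r).
  assert (L := rsum_lb (S r + a) (b - a) ltac:(lia)).
  replace (S r + a + (b - a))%nat with (S r + b)%nat in L by lia.
  set (D := INR (b - a)) in *. set (M := INR (S r + b)) in *.
  assert (HM : 0 < M) by (apply lt_0_INR; lia).
  assert (HC : 0 < INR (S c)) by (apply lt_0_INR; lia).
  assert (HCD : M <= 2 * INR (S c) * D).
  { unfold M, D. replace 2 with (INR 2) by (simpl; lra). rewrite <- !mult_INR. apply le_INR.
    replace (S c) with (c + 1)%nat by lia. lia. }
  assert (/ (2 * INR (S c)) <= D / M).
  { apply (Rmult_le_reg_r (2 * INR (S c) * M)). nra.
    replace (/ (2 * INR (S c)) * (2 * INR (S c) * M)) with M by (field; lra).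
    replace (D / M * (2 * INR (S c) * M)) with (2 * INR (S c) * D) by (field; lra). lra. }
  replace (/ (2 * sigmaH r * INR (S c))) with (/ sigmaH r * / (2 * INR (S c))) by (field; lra).
  apply Rmult_le_compat_l. left; apply Rinv_0_lt_compat; auto. lra.
Qed.

Lemma s_mono n s d : valid_instance n s d -> forall i j, (j <= i)%nat -> (i < n)%nat -> s j <= s i.
Proof.
  intros [_ [_ [_ Hs]]]. induction i; intros j Hj Hi.
  - replace j with 0%nat by lia. lra.
  - destruct (Nat.eq_dec j (S i)) as [->|Hne]. lra.
    apply Rle_trans with (s i). apply IHi; lia. apply Hs; lia.
Qed.

Lemma fold_Rmax_ge x l : In x l -> x <= fold_right Rmax 0 l.
Proof.
  induction l; simpl; [tauto|]. intros [->|H]. apply Rmax_l.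
  eapply Rle_trans; [apply IHl; auto| apply Rmax_r].
Qed.

Lemma d_le_T n d i : (i < n)%nat -> d i <= Tmax n d.
Proof.
  intro H. apply fold_Rmax_ge. apply in_map. apply in_seq. lia.
Qed.

Lemma s_range n s d i : valid_instance n s d -> (i < n)%nat -> 0 <= s i <= Tmax n d.
Proof.
  intros Hv Hi. split.
  - pose proof Hv as [_ [H0 _]]. rewrite <- H0. apply (s_mono n s d Hv); lia.
  - destruct Hv as [_ [_ [Hsd _]]]. apply Rle_trans with (d i). left; auto. apply d_le_T; auto.
Qed.

Lemma present_b_spec s d t j : present_b s d t j = true <-> present s d j t.
Proof.
  unfold present_b, present. destruct (Rle_dec (s j) t); destruct (Rle_dec t (d j)); split; intro H;
  try discriminate; try tauto; lra.
Qed.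

Lemma in_pres n s d t j : In j (filter (present_b s d t) (seq 0 n)) <-> (j < n)%nat /\ present s d j t.
Proof. rewrite filter_In, in_seq, present_b_spec. split; intros [H1 H2]; split; auto; lia. Qed.

Lemma count_le n s d t J : NoDup J -> (forall j, In j J -> (j < n)%nat /\ present s d j t) ->
  (length J <= npresent n s d t)%nat.
Proof.
  intros H1 H2. unfold npresent. apply NoDup_incl_length; auto.
  intros j Hj. apply in_pres. auto.
Qed.

Lemma buildJ (Pj : nat -> Prop) (X : nat -> R) (L : list R) : NoDup L ->
  (forall p, In p L -> exists j, Pj j /\ X j = p) ->
  exists J, NoDup J /\ length J = length L /\ forall j, In j J -> Pj j /\ In (X j) L.
Proof.
  induction L as [|p L IH]; intros Hnd H.
  - exists []; simpl; split; [constructor|]; split; [auto|]. intros j [].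
  - inversion Hnd; subst. destruct IH as [J [HJ1 [HJ2 HJ3]]]; auto.
    intros q Hq; apply H; simpl; auto.
    destruct (H p (or_introl eq_refl)) as [j0 [Hj0 Ej0]].
    exists (j0 :: J). simpl. split; [|split].
    + constructor; auto. intro Hin. apply HJ3 in Hin. destruct Hin as [_ Hin]. rewrite Ej0 in Hin; auto.
    + lia.
    + intros j1 [<-|Hj]. split; auto. destruct (HJ3 j1 Hj). split; auto.
Qed.

Lemma Qhat_S X i p : Qhat X (S i) p <-> Qhat X i p \/ X i = p.
Proof.
  unfold Qhat. split.
  - intros [j [Hj E]]. destruct (Nat.eq_dec j i) as [->|Hne]; auto. left; exists j; split; auto; lia.
  - intros [[j [Hj E]]|E]. exists j; split; auto; lia. exists i; split; auto.
Qed.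

Lemma NoDup_firstn {A} (l : list A) c : NoDup l -> NoDup (firstn c l).
Proof.
  intro H. rewrite <- (firstn_skipn c l) in H. eapply NoDup_app_remove_r; eauto.
Qed.

Lemma nth_in_firstn {A} (l : list A) c k d0 : (k < c)%nat -> (k < length l)%nat -> In (nth k l d0) (firstn c l).
Proof.
  intros H1 H2.
  replace (nth k l d0) with (nth k (firstn c l) d0).
  apply nth_In. rewrite length_firstn. lia.
  rewrite nth_firstn. replace (k <? c)%nat with true; auto. symmetry; apply Nat.ltb_lt; auto.
Qed.

Lemma nth_notin_firstn (l : list R) c : NoDup l -> (c < length l)%nat -> ~ In (nth c l 0) (firstn c l).
Proof.
  intros Hnd Hc Hin. apply (In_nth _ _ 0) in Hin. destruct Hin as [k [Hk E]].
  rewrite length_firstn in Hk. rewrite nth_firstn in E.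
  replace (k <? c)%nat with true in E by (symmetry; apply Nat.ltb_lt; lia).
  apply (proj1 (NoDup_nth l 0) Hnd) in E; lia.
Qed.

Lemma firstn_S_app {A} (l : list A) c d0 : (c < length l)%nat -> firstn (S c) l = firstn c l ++ [nth c l d0].
Proof.
  revert c; induction l; intros c Hc; simpl in *. lia.
  destruct c; simpl; auto. f_equal. apply IHl. lia.
Qed.

Lemma gap_mid_notin A x : largest_gap_mid A x -> ~ A x.
Proof.
  unfold largest_gap_mid; simpl. intros [a [b [_ [_ [Hab [Hn [_ E]]]]]]]. subst x. intro H. apply (Hn ((a + b) / 2)). left; auto. lra.
Qed.

Lemma new_not_Qhat Q tau n s d X i : alg_run Q tau n s d X -> (i < n)%nat ->
  ~ (exists p, vacant s d X i p) -> ~ Qhat X i (X i).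
Proof.
  intros Hr Hi Hnv. destruct (Hr i Hi) as [_ [H2 H3]].
  destruct (classic (exists q, In q Q /\ ~ Qhat X i q)) as [Hq|Hq].
  - destruct (H2 Hnv Hq) as [k [_ [_ [H _]]]]. auto.
  - apply gap_mid_notin. apply H3; auto. intros q Hin. apply NNPP. intro H. apply Hq. eauto.
Qed.

Lemma distinct Q tau n s d X i j t : alg_run Q tau n s d X -> (j < i)%nat -> (i < n)%nat ->
  present s d i t -> present s d j t -> X i <> X j.
Proof.
  intros Hr Hji Hi Pi Pj E.
  assert (Ho : occupied s d X i (X j)) by (exists j; unfold present in *; repeat split; auto; lra).
  assert (Hq : Qhat X i (X j)) by (exists j; auto).
  destruct (classic (exists p, vacant s d X i p)) as [Hv|Hnv].
  - destruct (Hr i Hi) as [H1 _]. destruct (H1 Hv) as [_ Hno]. rewrite E in Hno. auto.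
  - apply (new_not_Qhat Q tau n s d X i Hr Hi Hnv). rewrite E; auto.
Qed.

Section Inv.
Variables (r : nat) (tau Q : list R).
Hypothesis Hnd : NoDup tau.
Hypothesis Hlen : length tau = r.
Hypothesis HQ : forall x, In x tau -> In x Q.
Variables (n : nat) (s d X : nat -> R).
Hypothesis Hv : valid_instance n s d.
Hypothesis Hm : forall t, 0 <= t <= Tmax n d -> (npresent n s d t <= r)%nat.
Hypothesis Hr : alg_run Q tau n s d X.

Lemma inv_alg : forall i, (i <= n)%nat -> exists c, (c <= r)%nat /\
  (forall p, Qhat X i p <-> In p (firstn c tau)) /\
  (c = 0%nat \/ exists t, 0 <= t <= Tmax n d /\ (c <= npresent n s d t)%nat).
Proof.
  induction i; intro Hi.
  - exists 0%nat. repeat split; auto; [lia| |simpl; tauto]. intros [j [Hj _]]; lia.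
  - destruct IHi as [c [Hc [HQh Ht]]]; [lia|].
    assert (Hin : (i < n)%nat) by lia.
    destruct (classic (exists p, vacant s d X i p)) as [Hvac|Hnv].
    + exists c. repeat split; auto.
      * intro H. apply Qhat_S in H. apply HQh. destruct H as [H|<-]; auto.
        destruct (Hr i Hin) as [H1 _]. apply H1; auto.
      * intro H. apply Qhat_S. left. apply HQh; auto.
    +
      assert (Hocc : forall p, In p (firstn c tau) -> exists j, ((j < i)%nat /\ s i <= d j) /\ X j = p).
      { intros p Hp. apply HQh in Hp. assert (occupied s d X i p).
        { apply NNPP. intro Hno. apply Hnv. exists p. split; auto. }
        destruct H as [j [Hj [Hsd E]]]. exists j; auto. }
      destruct (buildJ _ X _ (NoDup_firstn tau c Hnd) Hocc) as [J [HJnd [HJlen HJ]]].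
      rewrite length_firstn, Hlen in HJlen.
      assert (Hcnt : (S c <= npresent n s d (s i))%nat).
      { replace (S c) with (length (i :: J)) by (simpl; rewrite HJlen; lia).
        apply count_le.
        - constructor; auto. intro H. apply HJ in H. lia.
        - intros j [<-|Hj]. split; auto. pose proof Hv as [_ [_ [Hsd _]]]. unfold present.
          specialize (Hsd i Hin). lra.
          apply HJ in Hj. destruct Hj as [[Hj1 Hj2] _]. split; [lia|]. split; auto.
          apply (s_mono n s d Hv); lia. }
      assert (Hsr := s_range n s d i Hv Hin).
      assert (Hcr : (c < r)%nat) by (specialize (Hm _ Hsr); lia).
      set (q := nth c tau 0).
      assert (Hqn : ~ Qhat X i q).
      { intro H. apply HQh in H. apply (nth_notin_firstn tau c Hnd); auto. lia. }
      destruct (Hr i Hin) as [_ [H2 _]].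
      destruct (H2 Hnv) as [k [Hk [Ek [Hnk Hk']]]].
      { exists q. split; auto. apply HQ. apply nth_In. lia. }
      assert (k = c).
      { destruct (Nat.lt_total k c) as [Hlt|[Heq|Hgt]]; auto.
        - exfalso. apply Hnk. apply HQh. rewrite <- Ek. apply nth_in_firstn; lia.
        - exfalso. apply Hqn. apply Hk'. auto. }
      subst k.
      exists (S c). repeat split; [lia| | |].
      * intro H. apply Qhat_S in H. rewrite (firstn_S_app tau c 0) by lia. apply in_app_iff.
        destruct H as [H|H]. left; apply HQh; auto. right; simpl; left. rewrite <- H. auto.
      * rewrite (firstn_S_app tau c 0) by lia. intro H. apply Qhat_S. apply in_app_iff in H.
        destruct H as [H|[H|[]]]. left; apply HQh; auto. right. rewrite <- H. auto.
      * right. exists (s i). split; auto.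
Qed.
End Inv.

Lemma glb_lb (E : Rbar -> Prop) x : E x -> Rbar_le (Rbar_glb E) x.
Proof. intro H. unfold Rbar_glb. exact (proj1 (proj2_sig (Rbar_ex_glb E)) x H). Qed.
Lemma glb_great (E : Rbar -> Prop) b : (forall x, E x -> Rbar_le b x) -> Rbar_le b (Rbar_glb E).
Proof. intro H. unfold Rbar_glb. exact (proj2 (proj2_sig (Rbar_ex_glb E)) b H). Qed.
Lemma lub_least (E : Rbar -> Prop) b : (forall x, E x -> Rbar_le x b) -> Rbar_le (Rbar_lub E) b.
Proof. intro H. unfold Rbar_lub. exact (proj2 (proj2_sig (Rbar_ex_lub E)) b H). Qed.

Lemma max_exists (Y : nat -> R) L : L <> [] -> exists m, In m L /\ forall i, In i L -> Y i <= Y m.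
Proof.
  induction L as [|a L IH]; intro H; [congruence|].
  destruct L as [|b L'].
  - exists a; split; simpl; auto. intros i [<-|[]]; lra.
  - destruct IH as [m [Hm Hm']]; [congruence|].
    destruct (Rle_dec (Y a) (Y m)).
    + exists m; split; [right; auto|]. intros i [<-|Hi]; auto.
    + exists a; split; [left; auto|]. intros i [<-|Hi]. lra. specialize (Hm' i Hi); lra.
Qed.

Lemma pack (Y : nat -> R) dl : 0 <= dl -> forall k L, length L = S k -> NoDup L ->
  (forall i, In i L -> dl < Y i) ->
  (forall i j, In i L -> In j L -> i <> j -> dl < Rabs (Y i - Y j)) ->
  exists m, In m L /\ INR (S k) * dl < Y m.
Proof.
  intros Hd. induction k; intros L Hl Hnd H1 H2.
  - destruct L as [|a [|b L]]; simpl in Hl; try lia. exists a; split; [left; auto|].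
    simpl. specialize (H1 a (or_introl eq_refl)). lra.
  - destruct (max_exists Y L) as [m [Hm Hmax]]. intro E; subst; simpl in Hl; lia.
    destruct (in_split _ _ Hm) as [l1 [l2 E]]. subst L.
    assert (Hnd' := NoDup_remove_1 _ _ _ Hnd).
    assert (Hnm := NoDup_remove_2 _ _ _ Hnd).
    assert (Hinc : forall i, In i (l1 ++ l2) -> In i (l1 ++ m :: l2)).
    { intros i Hi. apply in_app_iff in Hi. apply in_app_iff. simpl. tauto. }
    destruct (IHk (l1 ++ l2)) as [m' [Hm' Hy]]; auto.
    { rewrite length_app in *. simpl in Hl. lia. }
    exists m. split; auto.
    assert (Hne : m' <> m) by (intro E; subst; auto).
    specialize (H2 m' m (Hinc _ Hm') Hm Hne). specialize (Hmax m' (Hinc _ Hm')).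
    rewrite Rabs_left1 in H2 by lra. rewrite S_INR. lra.
Qed.

Lemma dist_bd_le0 x : dist_bd x <= Rabs (x - 0).
Proof. apply Rmin_l. Qed.
Lemma dist_bd_le1 x : dist_bd x <= Rabs (x - 1).
Proof. apply Rmin_r. Qed.

Lemma OPT_bound n s d t0 : 0 <= t0 <= Tmax n d -> (1 <= npresent n s d t0)%nat ->
  Rbar_le (OPT_A n s d) (Finite (/ INR (S (npresent n s d t0)))).
Proof.
  intros Ht0 HN. set (N := npresent n s d t0) in *.
  unfold OPT_A. apply lub_least. intros v [Y [HY ->]].
  apply Rbar_le_trans with (dmin n s d Y t0).
  { unfold minval. apply glb_lb. exists t0; auto. }
  apply Rbar_not_lt_le. intro Hlt.
  set (dl := / INR (S N)).
  assert (HSN : 0 < INR (S N)) by (apply lt_0_INR; lia).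
  assert (Hdl : 0 < dl) by (apply Rinv_0_lt_compat; auto).
  assert (Hall : forall y, ((exists i, (i < n)%nat /\ present s d i t0 /\ y = dist_bd (Y i)) \/
    (exists i j, (i < n)%nat /\ (j < n)%nat /\ i <> j /\
       present s d i t0 /\ present s d j t0 /\ y = Rabs (Y i - Y j))) -> dl < y).
  { intros y Hy. unfold dmin in Hlt. destruct (Glb_Rbar_correct (fun y =>
    (exists i, (i < n)%nat /\ present s d i t0 /\ y = dist_bd (Y i)) \/
    (exists i j, (i < n)%nat /\ (j < n)%nat /\ i <> j /\
       present s d i t0 /\ present s d j t0 /\ y = Rabs (Y i - Y j)))) as [Hlb _].
    specialize (Hlb y Hy). assert (H := Rbar_lt_le_trans _ _ _ Hlt Hlb). simpl in H. exact H. }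
  set (L := filter (present_b s d t0) (seq 0 n)).
  assert (HL : length L = S (N - 1)) by (unfold L, N, npresent in *; lia).
  assert (S1 : NoDup L) by (apply NoDup_filter, seq_NoDup).
  assert (S2 : forall i, In i L -> dl < Y i).
  { intros i Hi. apply in_pres in Hi. destruct Hi as [Hi Pi].
    assert (H := Hall (dist_bd (Y i)) (or_introl (ex_intro _ i (conj Hi (conj Pi eq_refl))))).
    assert (H' := dist_bd_le0 (Y i)). specialize (HY i Hi). rewrite Rabs_right in H' by lra. lra. }
  assert (S3 : forall i j, In i L -> In j L -> i <> j -> dl < Rabs (Y i - Y j)).
  { intros i j Hi Hj Hij. apply in_pres in Hi, Hj. destruct Hi as [Hi Pi], Hj as [Hj Pj].
    apply Hall. right. exists i, j. split; [|split; [|split; [|split; [|split]]]]; auto. }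
  destruct (pack Y dl (Rlt_le _ _ Hdl) (N - 1) L HL S1 S2 S3) as [m [Hm Hym]].
  apply in_pres in Hm. destruct Hm as [Hm Pm].
    assert (H := Hall (dist_bd (Y m)) (or_introl (ex_intro _ m (conj Hm (conj Pm eq_refl))))).
    assert (H' := dist_bd_le1 (Y m)). specialize (HY m Hm). rewrite Rabs_left1 in H' by lra.
    replace (S (N - 1)) with N in Hym by lia.
    assert (E : INR (S N) * dl = 1) by (unfold dl; field; lra).
    rewrite S_INR in E. lra.
Qed.

Section Main.
Variables (r : nat) (tau Q : list R) (K : R).
Hypothesis HK : 0 < K.
Hypothesis Hnd : NoDup tau.
Hypothesis Hlen : length tau = r.
Hypothesis HQ : forall x, In x tau -> In x Q.
Hypothesis HG : forall c, (c <= r)%nat ->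
  (forall x y, In x (firstn c tau) -> In y (firstn c tau) -> x <> y -> / (K * INR (S c)) <= Rabs (x - y)) /\
  (forall x, In x (firstn c tau) -> / (K * INR (S c)) <= dist_bd x).

Lemma alg_main n s d : valid_instance n s d ->
  (forall t, 0 <= t <= Tmax n d -> (npresent n s d t <= r)%nat) ->
  forall X, alg_run Q tau n s d X ->
  Rbar_le (OPT_A n s d) (Rbar_mult (Finite K) (minval n s d X)).
Proof.
  intros Hv Hm X Hr.
  destruct (inv_alg r tau Q Hnd Hlen HQ n s d X Hv Hm Hr n (le_n n)) as [c [Hc [HQh Ht]]].
  assert (Hn : (0 < n)%nat) by (destruct Hv; auto).
  assert (HX : forall i, (i < n)%nat -> In (X i) (firstn c tau)).
  { intros i Hi. apply HQh. exists i; auto. }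
  destruct Ht as [Hc0|[t0 [Ht0 HcN]]].
  { exfalso. specialize (HX 0%nat Hn). subst c. simpl in HX. auto. }
  assert (Hc1 : (1 <= c)%nat).
  { destruct c; auto; try lia. specialize (HX 0%nat Hn). simpl in HX. contradiction. }
  destruct (HG c Hc) as [HG1 HG2].
  set (g := / (K * INR (S c))).
  assert (Hmin : Rbar_le (Finite g) (minval n s d X)).
  { unfold minval. apply glb_great.
    intros v [t [_ ->]]. unfold dmin.
    destruct (Glb_Rbar_correct (fun y =>
    (exists i, (i < n)%nat /\ present s d i t /\ y = dist_bd (X i)) \/
    (exists i j, (i < n)%nat /\ (j < n)%nat /\ i <> j /\
       present s d i t /\ present s d j t /\ y = Rabs (X i - X j)))) as [_ Hgl].
    apply Hgl. intros y [[i [Hi [Pi ->]]]|[i [j [Hi [Hj [Hij [Pi [Pj ->]]]]]]]]; simpl.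
    - apply HG2; auto.
    - apply HG1; auto. destruct (Nat.lt_total i j) as [H|[H|H]]; [|contradiction|].
      + intro E. apply (distinct Q tau n s d X j i t Hr H Hj Pj Pi). auto.
      + apply (distinct Q tau n s d X i j t Hr H Hi Pi Pj). }
  eapply Rbar_le_trans. apply (OPT_bound n s d t0 Ht0). lia.
  assert (HSc : 0 < INR (S c)) by (apply lt_0_INR; lia).
  assert (Hle : / INR (S (npresent n s d t0)) <= K * g).
  { unfold g. replace (K * / (K * INR (S c))) with (/ INR (S c)) by (field; lra).
    apply Rinv_le_contravar; auto. apply le_INR; lia. }
  destruct (minval n s d X) as [mv| |] eqn:Em; simpl in Hmin.
  - change (/ INR (S (npresent n s d t0)) <= K * mv). assert (K * g <= K * mv) by (apply Rmult_le_compat_l; lra). lra.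
  - rewrite Rbar_mult_comm. rewrite (is_Rbar_mult_unique _ _ _ (is_Rbar_mult_p_infty_pos (Finite K) HK)). simpl; auto.
  - contradiction.
Qed.
End Main.

Lemma qpos_lt r a b : (a < b)%nat -> qpos r a < qpos r b.
Proof.
  intro H. assert (E := qpos_diff r a b ltac:(lia)).
  assert (L := rsum_lb (S r + a) (b - a) ltac:(lia)).
  assert (0 < INR (b - a)) by (apply lt_0_INR; lia).
  assert (0 < INR (S r + a + (b - a))) by (apply lt_0_INR; lia).
  assert (0 < INR (b - a) / INR (S r + a + (b - a))) by (unfold Rdiv; apply Rmult_lt_0_compat; auto; apply Rinv_0_lt_compat; auto).
  assert (0 < / sigmaH r) by (apply Rinv_0_lt_compat, sigma_pos).
  assert (0 < / sigmaH r * rsum (S r + a) (b - a)) by (apply Rmult_lt_0_compat; lra).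
  lra.
Qed.

Lemma in_firstn_in {A} (x : A) c l : In x (firstn c l) -> In x l.
Proof. intro H. rewrite <- (firstn_skipn c l). apply in_app_iff; auto. Qed.

Theorem lemma2 (l : nat) (hl : (1 <= l)%nat) :
  let r := (2 ^ l - 1)%nat in
  exists tau : list R,
    Permutation tau (Qlist r) /\
    forall (n : nat) (s d : nat -> R),
      valid_instance n s d ->
      (forall t, 0 <= t <= Tmax n d -> (npresent n s d t <= r)%nat) ->
      forall X : nat -> R,
        alg_run (Qlist r) tau n s d X ->
        Rbar_le (OPT_A n s d) (Rbar_mult (Finite (2 * sigmaH r)) (minval n s d X)).
Proof.
  intro r.
  assert (HP : (1 <= 2 ^ l)%nat) by (apply Nat.le_succ_l, Nat.neq_0_lt_0, Nat.pow_nonzero; lia).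
  assert (Hr : S r = (2 ^ l)%nat) by (unfold r; lia).
  exists (map (qpos r) (tau l)).
  assert (Hperm : Permutation (map (qpos r) (tau l)) (Qlist r)).
  { unfold Qlist. apply Permutation_map. apply tau_perm. }
  split; auto.
  intros n s d Hv Hm X Hrun.
  apply (alg_main r (map (qpos r) (tau l)) (Qlist r)).
  - assert (Hs := sigma_pos r). lra.
  - apply FinFun.Injective_map_NoDup_in; [|apply tau_NoDup].
    intros x y _ _ E. destruct (Nat.lt_total x y) as [H|[H|H]]; auto;
    apply (qpos_lt r) in H; lra.
  - rewrite length_map, tau_len. auto.
  - intros x Hx. eapply Permutation_in; eauto.
  - intros c Hc.
    assert (Hc' : (c <= 2 ^ l - 1)%nat) by (unfold r in Hc; lia).
    assert (Gap : forall a b, (a < b)%nat -> Bd l c a -> Bd l c b ->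
               / (2 * sigmaH r * INR (S c)) <= qpos r b - qpos r a).
    { intros a b Hab Ha Hb. apply qpos_gap; auto. rewrite Hr. apply tau_gap; auto. }
    assert (Hx : forall x, In x (firstn c (map (qpos r) (tau l))) -> exists a, x = qpos r a /\ Bd l c a /\ (1 <= a < 2 ^ l)%nat).
    { intros x H. rewrite firstn_map in H. apply in_map_iff in H. destruct H as [a [<- Ha]].
      exists a. split; auto. split. right; right; auto. apply tau_In. eapply in_firstn_in; eauto. }
    split.
    + intros x y Hxi Hyi Hxy. destruct (Hx x Hxi) as [a [-> [Ha _]]], (Hx y Hyi) as [b [-> [Hb _]]].
      destruct (Nat.lt_total a b) as [H|[H|H]].
      * rewrite Rabs_minus_sym. rewrite Rabs_right. apply Gap; auto.
        apply Rle_ge, Rlt_le. apply Rlt_Rminus. apply qpos_lt; auto.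
      * subst; contradiction.
      * rewrite Rabs_right. apply Gap; auto.
        apply Rle_ge, Rlt_le. apply Rlt_Rminus. apply qpos_lt; auto.
    + intros x Hxi. destruct (Hx x Hxi) as [a [-> [Ha Ha']]].
      assert (G0 := Gap 0%nat a ltac:(lia) (or_introl eq_refl) Ha).
      assert (G1 := Gap a (2 ^ l)%nat ltac:(lia) Ha (or_intror (or_introl eq_refl))).
      rewrite <- Hr, qpos_top in G1. rewrite qpos_0 in G0.
      assert (0 < / (2 * sigmaH r * INR (S c))).
      { apply Rinv_0_lt_compat. assert (Hs := sigma_pos r). assert (0 < INR (S c)) by (apply lt_0_INR; lia). nra. }
      unfold dist_bd. apply Rmin_glb.
      * rewrite Rabs_right; lra.
      * rewrite Rabs_left; lra.
  - exact Hv.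
  - exact Hm.
  - exact Hrun.
Qed.
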